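(* Let $\mathcal D\subset\mathbb{C}$ be a fixed compact set whose distance to $[L_-^{\vartheta_N},L_+^{\vartheta_N}]$ is bounded below by a positive constant independent of $N$. Then there is a constant $C>0$ such that for all sufficiently large $N$, \[ \sup_{z\in\mathcal D}\big|m_{fc}^{\vartheta_N}(z)-m_{fc}^{\vartheta_\infty}(z)\big|\le C|\vartheta_N-\vartheta_\infty|. \]
   Context: $\nu$ is a deterministic centered compactly supported probability measure on $\mathbb{R}$; $I_\nu$ is the smallest interval containing $\operatorname{supp}\nu$, and $\inf_{x\in I_\nu}\int(v-x)^{-2}d\nu(v)\ge1+\varpi$ for some $\varpi>0$. For $\vartheta\in[0,1+\varpi]$, $m_{fc}^\vartheta$ is the unique analytic function on $\mathbb{C}^+$ with positive imaginary part solving $m_{fc}^\vartheta(z)=\int\frac{d\nu(x)}{\vartheta x-z-m_{fc}^\vartheta(z)}$; it is the Stieltjes transform $\int\frac{d\rho_{fc}^\vartheta(x)}{x-z}$ of a probability measure $\rho_{fc}^\vartheta$ supported on $[L_-^\vartheta,L_+^\vartheta]$, and this integral defines $m_{fc}^\vartheta$ on $\mathbb{C}\setminus[L_-^\vartheta,L_+^\vartheta]$. $\vartheta_N\in[0,1+\varpi]$ is a sequence with $\vartheta_N\to\vartheta_\infty$. *)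

(* Defs.v *)
From HB Require Import structures.
From mathcomp Require Import all_boot all_order all_algebra.
From mathcomp Require Import all_classical all_reals all_analysis.
From mathcomp Require Import complex.
Set Implicit Arguments. Unset Strict Implicit. Unset Printing Implicit Defensive.
Import Order.TTheory GRing.Theory Num.Theory.
Import numFieldNormedType.Exports.
Local Open Scope classical_set_scope.
Local Open Scope ring_scope.
Local Open Scope complex_scope.

Definition cmod (R : realType) (z : R[i]) : R :=
  Num.sqrt (complex.Re z ^+ 2 + complex.Im z ^+ 2).

Definition cintegral (R : realType) (mu : {measure set R -> \bar R})
  (f : R -> R[i]) : R[i] :=
  (Rintegral mu setT (fun x => complex.Re (f x)))
  +i* (Rintegral mu setT (fun x => complex.Im (f x))).

Definition msupport (R : realType) (mu : {measure set R -> \bar R}) : set R :=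
  [set x | forall e : R, 0 < e -> (0 < mu (ball x e))%E].

Definition hull_interval (R : realType) (S : set R) : set R :=
  [set x | exists s1 s2, S s1 /\ S s2 /\ s1 <= x /\ x <= s2].

Definition inv_sq_ext (R : realType) (x v : R) : \bar R :=
  if v == x then +oo%E else ((v - x) ^- 2)%:E.

(* Main.v *)
Require Import Defs.
From HB Require Import structures.
From mathcomp Require Import all_boot all_order all_algebra.
From mathcomp Require Import all_classical all_reals all_analysis.
From mathcomp Require Import complex.
From mathcomp Require Import ring lra.
Import Order.TTheory GRing.Theory Num.Theory.
Import numFieldNormedType.Exports.
Local Open Scope classical_set_scope.
Local Open Scope ring_scope.
Local Open Scope complex_scope.
Set Implicit Arguments. Unset Strict Implicit. Unset Printing Implicit Defensive.

Notation cRe := complex.Re.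
Notation cIm := complex.Im.
Section Cmod.
Variable R : realType.
Implicit Types z w : R[i].

Lemma cmod_normc z : cmod z = Normc.normc z.
Proof. by case: z. Qed.

Lemma normc_cmod z : `|z| = (cmod z)%:C.
Proof. by case: z => a b; rewrite normc_def. Qed.

Lemma cmod_ge0 z : 0 <= cmod z.
Proof. exact: sqrtr_ge0. Qed.

Lemma cmodD z w : cmod (z + w) <= cmod z + cmod w.
Proof.
have := ler_normD z w; rewrite !normc_cmod -rmorphD /=.
by rewrite lecR.
Qed.

Lemma cmodM z w : cmod (z * w) = cmod z * cmod w.
Proof. by rewrite !cmod_normc Normc.normcM. Qed.

Lemma cmodV z : cmod (z^-1) = (cmod z)^-1.
Proof. by rewrite !cmod_normc Normc.normcV. Qed.

Lemma cmodN z : cmod (- z) = cmod z.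
Proof. by case: z => a b; rewrite /cmod /= !sqrrN. Qed.

Lemma cmodB z w : cmod (z - w) = cmod (w - z).
Proof. by rewrite -cmodN opprB. Qed.

Lemma cmod_conj z : cmod (z^*) = cmod z.
Proof. by case: z => a b; rewrite /cmod /= !sqrrN. Qed.

Lemma cmod_real (x : R) : cmod (x%:C) = `|x|.
Proof. by rewrite /cmod /= expr0n /= addr0 sqrtr_sqr. Qed.

Lemma cmod_sqr z : cmod z ^+ 2 = cRe z ^+ 2 + cIm z ^+ 2.
Proof. by rewrite /cmod sqr_sqrtr // addr_ge0 // sqr_ge0. Qed.

Lemma cmod_Re z : `|cRe z| <= cmod z.
Proof.
rewrite /cmod -(sqrtr_sqr (cRe z)) ler_sqrt ?lerDl ?sqr_ge0 //.
by rewrite addr_ge0 // sqr_ge0.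
Qed.

Lemma cmod_Im z : `|cIm z| <= cmod z.
Proof.
rewrite /cmod -(sqrtr_sqr (cIm z)) ler_sqrt ?lerDr ?sqr_ge0 //.
by rewrite addr_ge0 // sqr_ge0.
Qed.

Lemma cmod_eq0 z : (cmod z == 0) = (z == 0).
Proof.
apply/idP/idP => [/eqP h|/eqP ->]; last by rewrite /cmod /= expr0n /= addr0 sqrtr0.
by apply/eqP; apply: Normc.eq0_normc; rewrite -cmod_normc.
Qed.

Lemma cmod_gt0 z : (0 < cmod z) = (z != 0).
Proof. by rewrite lt_def cmod_ge0 andbT cmod_eq0. Qed.

Lemma cmod_Im_le z : cIm z <= cmod z.
Proof. exact: le_trans (ler_norm _) (cmod_Im z). Qed.

Lemma cmod_Re_le z : cRe z <= cmod z.
Proof. exact: le_trans (ler_norm _) (cmod_Re z). Qed.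

Lemma Re_inv z : cRe (z^-1) = cRe z / (cmod z ^+ 2).
Proof. by case: z => a b; rewrite cmod_sqr. Qed.

Lemma Im_inv z : cIm (z^-1) = - cIm z / (cmod z ^+ 2).
Proof. by case: z => a b; rewrite cmod_sqr /= mulNr. Qed.

End Cmod.

Section Meas.
Variable R : realType.

Lemma measurable_inv : measurable_fun [set: R] (fun x : R => x^-1).
Proof.
have -> : [set: R] = ~` [set 0] `|` [set 0] by rewrite setUC setUv.
apply/measurable_funU => //; first by apply: measurableC.
split.
  apply: measurable_realfun.open_continuous_measurable_fun.
    by apply: closed_openC; exact: closed_eq.
  move=> x; rewrite inE /= => /eqP x0; exact: inv_continuous.
move=> _ Y mY; rewrite (_ : [set 0] `&` _ = if (0:R)^-1 \in Y then [set 0] else set0).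
  by case: ifP.
apply/seteqP; split=> [x [/= -> Yx]|x].
  by rewrite mem_set.
by case: ifP => // /set_mem Y0 /= ->.
Qed.

Lemma boundedP (T : Type) (f : T -> R) (S : set T) (K : R) :
  (forall x, S x -> `|f x| <= K) -> [bounded f x | x in S].
Proof.
move=> h; rewrite /bounded_near; near=> M; move=> x /= Sx; apply: le_trans (h _ Sx) _.
near: M; apply: nbhs_pinfty_ge; exact: num_real.
Unshelve. all: by end_near.
Qed.

Variable P : probability R R.

Lemma int_on (S : set R) (f : R -> R) K :
  measurable S -> P (~` S) = 0%E -> measurable_fun setT f ->
  (forall x, S x -> `|f x| <= K) ->
  P.-integrable setT (EFin \o f) /\ Rintegral P setT f = Rintegral P S f.
Proof.
move=> mS PS mf bf.
have iS : P.-integrable S (EFin \o f).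
  apply: measurable_bounded_integrable => //.
    by rewrite (le_lt_trans (probability_le1 _ _)) ?ltry.
    exact: measurable_funS mf.
  exact: boundedP bf.
have iT : P.-integrable setT (EFin \o f).
  apply/(@negligible_integrable _ _ _ P setT (~` S)) => //.
  - exact: measurableC.
  - exact/measurable_realfun.measurable_EFinP.
  by rewrite setTD setCK.
split => //; rewrite /Rintegral (@negligible_integral _ _ _ P setT (~` S)) //.
  by rewrite setTD setCK.
exact: measurableC.
Qed.

End Meas.

Section Supp.
Variable R : realType.
Variable P : probability R R.

Lemma ballRE (c h y : R) : ball c h y = (`|c - y| < h).
Proof. by rewrite -ball_normE. Qed.

Definition Gb (t : nat * nat * bool) : set R :=
  let: (k, m, s) := t in
  let h := (k.+1%:R : R)^-1 in
  let c := (if s then -1 else 1) * m%:R * h in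
  if P (ball c h) == 0%E then ball c h else set0.

Definition Fb (n : nat) : set R :=
  match @unpickle (prod (prod nat nat) bool) n with Some t => Gb t | None => set0 end.

Lemma Fb_meas n : measurable (Fb n).
Proof.
rewrite /Fb; case: unpickle => [[[k m] s]|] //=.
by case: ifP => // _; exact: measurable_realfun.measurable_ball.
Qed.

Lemma Fb_null n : P (Fb n) = 0%E.
Proof.
rewrite /Fb; case: unpickle => [[[k m] s]|] /=; last exact: measure0.
by case: ifP => [/eqP //|_]; exact: measure0.
Qed.

Lemma not_supp_cover x : ~ msupport P x -> exists n, Fb n x.
Proof.
move=> /existsNP [e /not_implyP [e0 /negP]]; rewrite -leNgt => Pe.
have Pe0 : P (ball x e) = 0%E by apply/le_anti; rewrite Pe measure_ge0.
set k := Num.trunc (2 / e).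
set h := (k.+1%:R : R)^-1.
have h0 : 0 < h by rewrite invr_gt0 ltr0n.
have he : 2 * h < e.
  have := truncnS_gt (2 / e); rewrite -/k ltr_pdivrMr // => H.
  by rewrite /h ltr_pdivrMr ?ltr0n // mulrC.
set m := Num.trunc (`|x| / h).
set s := x < 0.
set c := (if s then -1 else 1) * m%:R * h.
have hm := truncn_itv (divr_ge0 (normr_ge0 x) (ltW h0)).
rewrite -/m in hm; case/andP: hm => hm1 hm2.
rewrite ler_pdivlMr // in hm1; rewrite ltr_pdivrMr // in hm2.
have xc : `|x - c| < h.
  rewrite /c /s; case: (ltrP x 0) => x0.
    rewrite mulN1r mulNr opprK.
    rewrite ltr0_norm // in hm1 hm2.
    rewrite mulrSr in hm2.
    rewrite ler0_norm; lra.
  rewrite ger0_norm // in hm1 hm2; rewrite mul1r ger0_norm ?subr_ge0 //.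
  rewrite mulrSr in hm2. lra.
have sub : ball c h `<=` ball x e.
  move=> y; rewrite !ballRE => cy.
  rewrite (le_lt_trans _ he) // (_ : x - y = (x - c) + (c - y)); last by rewrite addrA subrK.
  have := ler_normD (x - c) (c - y). lra.
have Pc : P (ball c h) = 0%E.
  apply/le_anti; rewrite measure_ge0 andbT -Pe0; apply: le_measure => //;
  rewrite inE; exact: measurable_realfun.measurable_ball.
exists (pickle (k, m, s)); rewrite /Fb pickleK /= -/h -/c Pc eqxx ballRE.
by rewrite distrC.
Qed.

Lemma null_outside (A : set R) : measurable A -> A `&` msupport P = set0 -> P A = 0%E.
Proof.
move=> mA AS.
apply/le_anti; rewrite measure_ge0 andbT.
apply: (le_trans (@measure_sigma_subadditive _ _ _ P A Fb Fb_meas mA _)).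
- move=> x Ax; have nS : ~ msupport P x.
    by move=> Sx; have : (A `&` msupport P) x by []; rewrite AS.
  by have [n Fn] := not_supp_cover nS; exists n.
by rewrite eseries0 // => i _ _; exact: Fb_null.
Qed.

Lemma null_outside_itv (a b : R) : msupport P `<=` `[a, b] -> P (~` `[a, b]) = 0%E.
Proof.
move=> sub; apply: null_outside; first exact: measurableC.
by apply/seteqP; split => // x [nx /sub].
Qed.

End Supp.

Section RInt.
Variable R : realType.
Variable P : probability R R.
Variables (S : set R) (mS : measurable S) (PS : P (~` S) = 0%E).

Definition rgood (f : R -> R) :=
  measurable_fun setT f /\ exists K, forall x, S x -> `|f x| <= K.

Lemma rgood_int f : rgood f -> P.-integrable setT (EFin \o f) /\
  Rintegral P setT f = Rintegral P S f.
Proof. by case=> mf [K hK]; exact: (int_on mS PS mf hK). Qed.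

Lemma rgood_intS f : rgood f -> P.-integrable S (EFin \o f).
Proof.
case=> mf [K hK]; apply: measurable_bounded_integrable => //.
  by rewrite (le_lt_trans (probability_le1 _ _)) ?ltry.
  exact: measurable_funS mf.
exact: boundedP hK.
Qed.

Lemma rgoodD f g : rgood f -> rgood g -> rgood (fun x => f x + g x).
Proof.
move=> [mf [K1 h1]] [mg [K2 h2]]; split.
  exact: measurable_realfun.measurable_funD.
exists (K1 + K2) => x Sx; apply: le_trans (ler_normD _ _) _; exact: lerD (h1 _ Sx) (h2 _ Sx).
Qed.

Lemma rgoodN f : rgood f -> rgood (fun x => - f x).
Proof.
move=> [mf [K1 h1]]; split; first exact: measurable_realfun.measurable_funN.
by exists K1 => x Sx; rewrite normrN h1.
Qed.

Lemma rgoodM f g : rgood f -> rgood g -> rgood (fun x => f x * g x).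
Proof.
move=> [mf [K1 h1]] [mg [K2 h2]]; split.
  exact: measurable_realfun.measurable_funM.
exists (K1 * K2) => x Sx; rewrite normrM; apply: ler_pM => //; exact: h1 _ Sx || exact: h2 _ Sx.
Qed.

Lemma rgoodC c : rgood (fun _ => c).
Proof. by split; [exact: measurable_cst | exists `|c|]. Qed.

Lemma rgoodV f c : 0 < c -> rgood f -> measurable_fun setT f ->
  (forall x, S x -> c <= `|f x|) -> rgood (fun x => (f x)^-1).
Proof.
move=> c0 [mf _] _ hc; split.
  exact: (measurableT_comp (@measurable_inv R) mf).
exists c^-1 => x Sx; rewrite normfV lef_pV2 ?posrE //; first exact: hc.
exact: lt_le_trans c0 (hc _ Sx).
Qed.

Lemma RintD f g : rgood f -> rgood g ->
  Rintegral P setT (fun x => f x + g x) = Rintegral P setT f + Rintegral P setT g.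
Proof.
move=> hf hg; apply: RintegralD => //; [exact: (rgood_int hf).1 | exact: (rgood_int hg).1].
Qed.

Lemma RintZ c f : rgood f ->
  Rintegral P setT (fun x => c * f x) = c * Rintegral P setT f.
Proof. by move=> hf; apply: RintegralZl => //; exact: (rgood_int hf).1. Qed.

Lemma RintN f : rgood f ->
  Rintegral P setT (fun x => - f x) = - Rintegral P setT f.
Proof.
move=> hf; rewrite -mulN1r -RintZ //; apply: eq_Rintegral => x _; by rewrite mulN1r.
Qed.

Lemma RintC c : Rintegral P setT (fun _ => c) = c.
Proof. rewrite Rintegral_cst // -[RHS]mulr1; congr (_ * _); have := probability_setT P; move=> /(congr1 fine) h; exact: h. Qed.

Lemma Rint_le f g : rgood f -> rgood g -> (forall x, S x -> f x <= g x) ->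
  Rintegral P setT f <= Rintegral P setT g.
Proof.
move=> hf hg fg; rewrite (rgood_int hf).2 (rgood_int hg).2.
by apply: le_Rintegral => //; exact: rgood_intS.
Qed.

Lemma Rint_ge0 f : rgood f -> (forall x, S x -> 0 <= f x) -> 0 <= Rintegral P setT f.
Proof. by move=> hf h; rewrite -(RintC 0); apply: Rint_le => //; exact: rgoodC. Qed.

Lemma Rint_ub f K : rgood f -> (forall x, S x -> f x <= K) -> Rintegral P setT f <= K.
Proof. by move=> hf h; rewrite -(RintC K); apply: Rint_le => //; exact: rgoodC. Qed.

Lemma Rint_lb f K : rgood f -> (forall x, S x -> K <= f x) -> K <= Rintegral P setT f.
Proof. by move=> hf h; rewrite -(RintC K); apply: Rint_le => //; exact: rgoodC. Qed.

End RInt.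

Section CInt.
Variable R : realType.
Implicit Types z w : R[i].

Lemma ReM z w : cRe (z * w) = cRe z * cRe w - cIm z * cIm w.
Proof. by case: z => a b; case: w => c d. Qed.
Lemma ImM z w : cIm (z * w) = cRe z * cIm w + cIm z * cRe w.
Proof. by case: z => a b; case: w => c d. Qed.
Lemma ReD z w : cRe (z + w) = cRe z + cRe w.
Proof. by case: z => a b; case: w => c d. Qed.
Lemma ImD z w : cIm (z + w) = cIm z + cIm w.
Proof. by case: z => a b; case: w => c d. Qed.
Lemma ReN z : cRe (- z) = - cRe z.
Proof. by case: z => a b. Qed.
Lemma ImN z : cIm (- z) = - cIm z.
Proof. by case: z => a b. Qed.
Lemma ReB z w : cRe (z - w) = cRe z - cRe w.
Proof. by rewrite ReD ReN. Qed.
Lemma ImB z w : cIm (z - w) = cIm z - cIm w.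
Proof. by rewrite ImD ImN. Qed.
Lemma Re_real (x : R) : cRe (x%:C) = x. Proof. by []. Qed.
Lemma Im_real (x : R) : cIm (x%:C) = 0. Proof. by []. Qed.
Lemma Re_conj z : cRe (z^*) = cRe z. Proof. by case: z. Qed.
Lemma Im_conj z : cIm (z^*) = - cIm z. Proof. by case: z. Qed.
Lemma complex_eta z : z = (cRe z) +i* (cIm z). Proof. by case: z. Qed.

Variable P : probability R R.
Variables (S : set R) (mS : measurable S) (PS : P (~` S) = 0%E).

Definition cgood (f : R -> R[i]) :=
  rgood S (fun x => cRe (f x)) /\ rgood S (fun x => cIm (f x)).

Definition cint (f : R -> R[i]) := cintegral P f.

Lemma rgood_ext f g : (forall x, f x = g x) -> rgood S f -> rgood S g.
Proof. by move=> fg; have -> : g = f by apply/funext => x; rewrite fg. Qed.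

Lemma cgoodD f g : cgood f -> cgood g -> cgood (fun x => f x + g x).
Proof.
move=> [f1 f2] [g1 g2]; split.
  by apply: rgood_ext (rgoodD f1 g1) => x; rewrite ReD.
by apply: rgood_ext (rgoodD f2 g2) => x; rewrite ImD.
Qed.

Lemma cgoodN f : cgood f -> cgood (fun x => - f x).
Proof.
move=> [f1 f2]; split.
  by apply: rgood_ext (rgoodN f1) => x; rewrite ReN.
by apply: rgood_ext (rgoodN f2) => x; rewrite ImN.
Qed.

Lemma cgoodB f g : cgood f -> cgood g -> cgood (fun x => f x - g x).
Proof. by move=> hf hg; apply: cgoodD hf (cgoodN hg). Qed.

Lemma cgoodM f g : cgood f -> cgood g -> cgood (fun x => f x * g x).
Proof.
move=> [f1 f2] [g1 g2]; split.
  by apply: rgood_ext (rgoodD (rgoodM f1 g1) (rgoodN (rgoodM f2 g2))) => x; rewrite ReM.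
by apply: rgood_ext (rgoodD (rgoodM f1 g2) (rgoodM f2 g1)) => x; rewrite ImM.
Qed.

Lemma cgoodC c : cgood (fun _ => c).
Proof. by split; exact: rgoodC. Qed.

Lemma cgood_real f : rgood S f -> cgood (fun x => (f x)%:C).
Proof. by move=> hf; split => //; exact: rgoodC. Qed.

Lemma cgood_conj f : cgood f -> cgood (fun x => (f x)^*).
Proof.
move=> [f1 f2]; split.
  by apply: rgood_ext f1 => x; rewrite Re_conj.
by apply: rgood_ext (rgoodN f2) => x; rewrite Im_conj.
Qed.

Lemma cgoodV f c : 0 < c -> cgood f -> (forall x, S x -> c <= cmod (f x)) ->
  cgood (fun x => (f x)^-1).
Proof.
move=> c0 [f1 f2] hc.
have hn : rgood S (fun x => ((cRe (f x)) ^+ 2 + (cIm (f x)) ^+ 2)^-1).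
  have h2 : rgood S (fun x => (cRe (f x)) ^+ 2 + (cIm (f x)) ^+ 2).
    by apply: rgoodD; [apply: rgood_ext (rgoodM f1 f1) | apply: rgood_ext (rgoodM f2 f2)] => x; rewrite expr2.
  apply: (rgoodV (c := c ^+ 2)) h2 h2.1 _; first exact: exprn_gt0.
  move=> x Sx; rewrite -cmod_sqr ger0_norm ?sqr_ge0 //.
  by rewrite lerXn2r ?nnegrE ?cmod_ge0 ?(ltW c0) // hc.
split.
  by apply: rgood_ext (rgoodM f1 hn) => x; rewrite Re_inv cmod_sqr.
by apply: rgood_ext (rgoodM (rgoodN f2) hn) => x; rewrite Im_inv cmod_sqr.
Qed.

Lemma Re_cint f : cRe (cint f) = Rintegral P setT (fun x => cRe (f x)).
Proof. by []. Qed.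
Lemma Im_cint f : cIm (cint f) = Rintegral P setT (fun x => cIm (f x)).
Proof. by []. Qed.

Lemma cintD f g : cgood f -> cgood g -> cint (fun x => f x + g x) = cint f + cint g.
Proof.
move=> [f1 f2] [g1 g2]; rewrite [LHS]complex_eta [cint f + _]complex_eta.
rewrite Re_cint Im_cint ReD ImD !Re_cint !Im_cint.
rewrite -(RintD mS PS f1 g1) -(RintD mS PS f2 g2).
by congr (_ +i* _); apply: eq_Rintegral => x _; rewrite ?ReD ?ImD.
Qed.

Lemma cintN f : cgood f -> cint (fun x => - f x) = - cint f.
Proof.
move=> [f1 f2]; rewrite [LHS]complex_eta [- cint f]complex_eta.
rewrite Re_cint Im_cint ReN ImN !Re_cint !Im_cint.
rewrite -(RintN mS PS f1) -(RintN mS PS f2).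
by congr (_ +i* _); apply: eq_Rintegral => x _; rewrite ?ReN ?ImN.
Qed.

Lemma cintB f g : cgood f -> cgood g -> cint (fun x => f x - g x) = cint f - cint g.
Proof. by move=> hf hg; rewrite cintD ?cintN //; exact: cgoodN. Qed.

Lemma cintC c : cint (fun _ => c) = c.
Proof. rewrite /cint /cintegral. rewrite !RintC. by case: c. Qed.

Lemma Rint_lin2 a b f g : rgood S f -> rgood S g ->
  Rintegral P setT (fun x => a * f x + b * g x) =
  a * Rintegral P setT f + b * Rintegral P setT g.
Proof.
move=> hf hg; rewrite (RintD mS PS); first by rewrite !(RintZ mS PS).
- by apply: rgood_ext (rgoodM (rgoodC _ a) hf) => x.
- by apply: rgood_ext (rgoodM (rgoodC _ b) hg) => x.
Qed.

Lemma cintZ c f : cgood f -> cint (fun x => c * f x) = c * cint f.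
Proof.
move=> [f1 f2]; rewrite [LHS]complex_eta [c * cint f]complex_eta.
rewrite Re_cint Im_cint ReM ImM !Re_cint !Im_cint.
congr (_ +i* _).
  rewrite -mulNr -(Rint_lin2 _ _ f1 f2).
  by apply: eq_Rintegral => x _; rewrite ReM mulNr.
rewrite -(Rint_lin2 _ _ f2 f1).
by apply: eq_Rintegral => x _; rewrite ImM.
Qed.

Lemma cint_conj f : cgood f -> cint (fun x => (f x)^*) = (cint f)^*.
Proof.
move=> [f1 f2]; rewrite [LHS]complex_eta [(cint f)^*]complex_eta.
rewrite Re_cint Im_cint Re_conj Im_conj !Re_cint !Im_cint -(RintN mS PS f2).
by congr (_ +i* _); apply: eq_Rintegral => x _; rewrite ?Re_conj ?Im_conj.
Qed.

Lemma conjM_self z : z^* * z = (cmod z ^+ 2)%:C.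
Proof.
rewrite cmod_sqr; case: z => a b /=.
rewrite /GRing.mul /= /mulc /=; apply/eqP; rewrite eq_complex /=; apply/andP; split; apply/eqP; ring.
Qed.

Lemma cint_norm f g : cgood f -> rgood S g ->
  (forall x, S x -> cmod (f x) <= g x) -> cmod (cint f) <= Rintegral P setT g.
Proof.
move=> hf hg fg.
have [I0|I0] := eqVneq (cint f) 0.
  rewrite I0 /cmod /= expr0n /= addr0 sqrtr0; apply: (Rint_ge0 mS PS) => //.
  by move=> x Sx; apply: le_trans (cmod_ge0 _) (fg _ Sx).
set I := cint f.
have cI : 0 < cmod I by rewrite cmod_gt0.
set u := ((cmod I)^-1)%:C * I^*.
have uI : u * I = (cmod I)%:C.
  rewrite /u -mulrA conjM_self -rmorphM /=; congr (_%:C).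
  by rewrite expr2 mulrA mulVf ?mul1r // gt_eqF.
have cu : cmod u = 1.
  by rewrite /u cmodM cmod_real cmod_conj ger0_norm ?invr_ge0 ?cmod_ge0 // mulVf // gt_eqF.
have : cmod I = cRe (cint (fun x => u * f x)) by rewrite cintZ // uI.
move=> ->; rewrite Re_cint; apply: (Rint_le mS PS) => //.
  by case: (cgoodM (cgoodC u) hf).
move=> x Sx; apply: le_trans (cmod_Re_le _) _; by rewrite cmodM cu mul1r fg.
Qed.

End CInt.

Section Core.
Variable R : realType.

Lemma rgood_invsq (S : set R) f c : 0 < c -> cgood S f ->
  (forall x, S x -> c <= cmod (f x)) -> rgood S (fun x => (cmod (f x) ^+ 2)^-1).
Proof.
move=> c0 [f1 f2] hc.
have h2 : rgood S (fun x => (cRe (f x)) ^+ 2 + (cIm (f x)) ^+ 2).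
  by apply: rgoodD; [apply: rgood_ext (rgoodM f1 f1) | apply: rgood_ext (rgoodM f2 f2)] => x; rewrite expr2.
apply: rgood_ext; last first.
  apply: (rgoodV (c := c ^+ 2)) h2 h2.1 _; first exact: exprn_gt0.
  move=> x Sx; rewrite -cmod_sqr ger0_norm ?sqr_ge0 //.
  by rewrite lerXn2r ?nnegrE ?cmod_ge0 ?(ltW c0) // hc.
by move=> x /=; rewrite cmod_sqr.
Qed.

Variable nu : probability R R.
Variables (M : R) (hM : 0 <= M) (PS : nu (~` `[-M, M]) = 0%E).
Let S : set R := `[-M, M].
Let mS : measurable S. Proof. exact: measurable_itv. Qed.

Lemma rgood_lin a : rgood S (fun x => a * x).
Proof.
split; first exact: measurable_realfun.mulrl_measurable.
exists (`|a| * M) => x; rewrite /S /= in_itv /= => hx.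
by rewrite normrM ler_wpM2l ?normr_ge0 // ler_norml.
Qed.


Lemma iden_gen (a b x z m1 m2 : R[i]) : a*x - z - m1 != 0 -> b*x - z - m2 != 0 ->
  (a*x - z - m1)^-1 - (b*x - z - m2)^-1 = (b - a) * x * ((a*x-z-m1)^-1 * (b*x-z-m2)^-1)
   + (m1 - m2) * ((a*x-z-m1)^-1 * (b*x-z-m2)^-1).
Proof. move=> h1 h2; field. by apply/andP. Qed.

Lemma AM_GM (s t : R) : s * t <= (s ^+ 2 + t ^+ 2) / 2.
Proof. have := sqr_ge0 (s - t); nra. Qed.

Lemma core (th1 th2 : R) (z m1 m2 : R[i]) (K1 : R) :
  0 < cIm z -> 0 < cIm m1 -> 0 < cIm m2 -> 0 <= K1 ->
  m1 = cintegral nu (fun x => ((th1 * x)%:C - z - m1)^-1) ->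
  m2 = cintegral nu (fun x => ((th2 * x)%:C - z - m2)^-1) ->
  cIm m1 <= cIm z * K1 ->
  cmod (m1 - m2) <= 2 * M * (1 + K1) * `|th1 - th2|.
Proof.
move=> v0 q10 q20 K10 eq1 eq2 qK.
set v := cIm z in v0 qK *.
set A1 := fun x => (th1 * x)%:C - z - m1.
set A2 := fun x => (th2 * x)%:C - z - m2.
have ImA1 x : cIm (A1 x) = - v - cIm m1 by rewrite /A1 !ImB Im_real sub0r.
have ImA2 x : cIm (A2 x) = - v - cIm m2 by rewrite /A2 !ImB Im_real sub0r.
have hA1 x : v <= cmod (A1 x).
  apply: le_trans (cmod_Im _); rewrite ImA1 ler0_norm; lra.
have hA2 x : v <= cmod (A2 x).
  apply: le_trans (cmod_Im _); rewrite ImA2 ler0_norm; lra.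
have nA1 x : A1 x != 0 by rewrite -cmod_gt0 (lt_le_trans v0).
have nA2 x : A2 x != 0 by rewrite -cmod_gt0 (lt_le_trans v0).
have gA1 : cgood S A1.
  by apply: cgoodB; [apply: cgoodB; [apply: cgood_real; exact: rgood_lin|exact: cgoodC]|exact: cgoodC].
have gA2 : cgood S A2.
  by apply: cgoodB; [apply: cgoodB; [apply: cgood_real; exact: rgood_lin|exact: cgoodC]|exact: cgoodC].
have gV1 : cgood S (fun x => (A1 x)^-1) by apply: (cgoodV v0 gA1) => x _; exact: hA1.
have gV2 : cgood S (fun x => (A2 x)^-1) by apply: (cgoodV v0 gA2) => x _; exact: hA2.
have r1 : rgood S (fun x => (cmod (A1 x) ^+ 2)^-1) by apply: (rgood_invsq v0 gA1) => x _; exact: hA1.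
have r2 : rgood S (fun x => (cmod (A2 x) ^+ 2)^-1) by apply: (rgood_invsq v0 gA2) => x _; exact: hA2.
set a1 := Rintegral nu setT (fun x => (cmod (A1 x) ^+ 2)^-1).
set a2 := Rintegral nu setT (fun x => (cmod (A2 x) ^+ 2)^-1).
have a10 : 0 <= a1 by apply: (Rint_ge0 mS PS r1) => x _; rewrite invr_ge0 sqr_ge0.
have a20 : 0 <= a2 by apply: (Rint_ge0 mS PS r2) => x _; rewrite invr_ge0 sqr_ge0.
have Ia1 : cIm m1 = (v + cIm m1) * a1.
  rewrite {1}eq1 Im_cint -(RintZ mS PS _ r1); apply: eq_Rintegral => x _.
  by rewrite -/(A1 x) Im_inv ImA1 opprB opprK addrC.
have Ia2 : cIm m2 = (v + cIm m2) * a2.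
  rewrite {1}eq2 Im_cint -(RintZ mS PS _ r2); apply: eq_Rintegral => x _.
  by rewrite -/(A2 x) Im_inv ImA2 opprB opprK addrC.
have a1b : a1 <= K1 / (1 + K1).
  rewrite ler_pdivlMr; last lra.
  nra.
have a2b : a2 <= 1 by nra.
set W := fun x => (A1 x)^-1 * (A2 x)^-1.
have gW : cgood S W by exact: cgoodM gV1 gV2.
set E := fun x => ((th2 - th1) * x)%:C * W x.
have gE : cgood S E.
  by apply: cgoodM => //; apply: cgood_real; exact: rgood_lin.
have iden x : (A1 x)^-1 - (A2 x)^-1 = E x + (m1 - m2) * W x.
  rewrite /E /W /A1 /A2 in nA1 nA2 *; rewrite !rmorphM !rmorphB /=.
  move: (nA1 x) (nA2 x); rewrite !rmorphM /=; exact: iden_gen.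
have key : m1 - m2 = cint nu E + (m1 - m2) * cint nu W.
  rewrite {1}eq1 {1}eq2 -!/(cint nu _).
  rewrite -(cintB mS PS gV1 gV2) -(cintZ mS PS _ gW) -(cintD mS PS gE).
    by apply: congr1; apply/funext => x; rewrite iden.
  exact: (cgoodM (cgoodC _ _) gW).
have bW : cmod (cint nu W) <= (a1 + a2) / 2.
  have -> : (a1 + a2) / 2 = Rintegral nu setT
      (fun x => 2^-1 * (cmod (A1 x) ^+ 2)^-1 + 2^-1 * (cmod (A2 x) ^+ 2)^-1).
    by rewrite (Rint_lin2 mS PS _ _ r1 r2) /a1 /a2; lra.
  apply: (cint_norm mS PS gW).
    by apply: rgoodD; apply: rgoodM => //; exact: rgoodC.
  move=> x _; rewrite /W cmodM !cmodV; apply: le_trans (AM_GM _ _) _.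
  by rewrite -!exprVn; lra.
have bE : cmod (cint nu E) <= `|th1 - th2| * M * ((a1 + a2) / 2).
  have -> : `|th1 - th2| * M * ((a1 + a2) / 2) = Rintegral nu setT
      (fun x => (`|th1 - th2| * M / 2) * (cmod (A1 x) ^+ 2)^-1 +
                (`|th1 - th2| * M / 2) * (cmod (A2 x) ^+ 2)^-1).
    by rewrite (Rint_lin2 mS PS _ _ r1 r2) /a1 /a2; lra.
  apply: (cint_norm mS PS gE).
    by apply: rgoodD; apply: rgoodM => //; exact: rgoodC.
  move=> x; rewrite /S /= in_itv /= => hx.
  have hx' : `|x| <= M by rewrite ler_norml.
  rewrite /E /W !cmodM !cmodV cmod_real normrM distrC.
  have := AM_GM (cmod (A1 x))^-1 (cmod (A2 x))^-1.
  rewrite -!exprVn.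
  have : 0 <= (cmod (A1 x))^-1 * (cmod (A2 x))^-1 by rewrite mulr_ge0 // invr_ge0 cmod_ge0.
  have : 0 <= `|th2 - th1| by [].
  rewrite (distrC th2) => h1 h2 h3.
  set p := (cmod (A1 x))^-1 * (cmod (A2 x))^-1 in h2 h3 *.
  have : `|th1 - th2| * `|x| * p <= `|th1 - th2| * M * p.
    by apply: ler_wpM2r => //; apply: ler_wpM2l.
  have h4 := ler_wpM2l (mulr_ge0 h1 hM) h3.
  rewrite mulrA; move=> h5; apply: le_trans h5 _; apply: le_trans h4 _; lra.
have D0 := cmod_ge0 (m1 - m2).
have : cmod (m1 - m2) <= cmod (cint nu E) + cmod (m1 - m2) * cmod (cint nu W).
  by rewrite {1}key; apply: le_trans (cmodD _ _) _; rewrite cmodM.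
have hd := normr_ge0 (th1 - th2).
move=> H.
have a1le1 : a1 <= 1.
  apply: le_trans a1b _; rewrite ler_pdivrMr; lra.
have H2 : cmod (m1 - m2) * (1 - (a1 + a2) / 2) <= `|th1 - th2| * M.
  have : cmod (m1 - m2) * cmod (cint nu W) <= cmod (m1 - m2) * ((a1 + a2) / 2).
    exact: ler_wpM2l.
  have : `|th1 - th2| * M * ((a1 + a2) / 2) <= `|th1 - th2| * M.
    rewrite -[leRHS]mulr1; apply: ler_wpM2l; [exact: mulr_ge0 | lra].
  nra.
have ha1 : 1 - (a1 + a2) / 2 >= (2 * (1 + K1))^-1.
  have : K1 / (1 + K1) = 1 - (1 + K1)^-1 by field; lra.
  move=> h; rewrite h in a1b.
  rewrite invfM; lra.
have pos : 0 < (2 * (1 + K1))^-1 by rewrite invr_gt0; lra.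
have : cmod (m1 - m2) * (2 * (1 + K1))^-1 <= `|th1 - th2| * M.
  apply: le_trans H2; exact: ler_wpM2l.
rewrite -ler_pdivlMr // invrK => h.
apply: le_trans h _; lra.
Qed.

End Core.

Section Stieltjes.
Variable R : realType.
Variable rho : probability R R.
Variables (S : set R) (mS : measurable S) (PS : rho (~` S) = 0%E).

Lemma cgoodV' (f : R -> R[i]) c : 0 < c ->
  measurable_fun setT (fun x => cRe (f x)) -> measurable_fun setT (fun x => cIm (f x)) ->
  (forall x, S x -> c <= cmod (f x)) -> cgood S (fun x => (f x)^-1).
Proof.
move=> c0 m1 m2 hc.
have mn : measurable_fun setT (fun x => ((cRe (f x)) ^+ 2 + (cIm (f x)) ^+ 2)^-1).
  apply: (measurableT_comp (@measurable_inv R)).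
  apply: measurable_realfun.measurable_funD;
    apply: measurable_realfun.measurable_funX => //.
have bd x : S x -> cmod ((f x)^-1) <= c^-1.
  move=> Sx; rewrite cmodV lef_pV2 ?posrE ?hc //.
  exact: lt_le_trans c0 (hc _ Sx).
split; split.
- have -> : (fun x => cRe ((f x)^-1)) = (fun x => cRe (f x) * ((cRe (f x)) ^+ 2 + (cIm (f x)) ^+ 2)^-1).
    by apply/funext => x; rewrite Re_inv cmod_sqr.
  exact: measurable_realfun.measurable_funM.
- by exists c^-1 => x Sx; apply: le_trans (cmod_Re _) (bd _ Sx).
- have -> : (fun x => cIm ((f x)^-1)) = (fun x => - cIm (f x) * ((cRe (f x)) ^+ 2 + (cIm (f x)) ^+ 2)^-1).
    by apply/funext => x; rewrite Im_inv cmod_sqr.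
  apply: measurable_realfun.measurable_funM => //.
  exact: measurable_realfun.measurable_funN.
- by exists c^-1 => x Sx; apply: le_trans (cmod_Im _) (bd _ Sx).
Qed.

Lemma cgood_shift (w : R[i]) d : 0 < d -> (forall x, S x -> d <= cmod (x%:C - w)) ->
  cgood S (fun x => (x%:C - w)^-1).
Proof.
move=> d0 hd; apply: (cgoodV' d0) => //.
- have -> : (fun x => cRe (x%:C - w)) = (fun x => x - cRe w) by apply/funext => x; rewrite ReB.
  apply: measurable_realfun.measurable_funB => //; exact: measurable_id.
- have -> : (fun x => cIm (x%:C - w)) = (fun x => - cIm w) by apply/funext => x; rewrite ImB Im_real sub0r.
  exact: measurable_cst.
Qed.

Lemma Im_shift_inv (x : R) (z : R[i]) :
  cIm ((x%:C - z)^-1) = cIm z / cmod (x%:C - z) ^+ 2.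
Proof. by rewrite Im_inv ImB Im_real sub0r opprK. Qed.

Lemma Im_stieltjes_ub (z : R[i]) d : 0 < d -> 0 <= cIm z ->
  (forall x, S x -> d <= cmod (x%:C - z)) ->
  cIm (cint rho (fun x => (x%:C - z)^-1)) <= cIm z / d ^+ 2.
Proof.
move=> d0 v0 hd; rewrite Im_cint.
apply: (Rint_ub mS PS); first exact: (cgood_shift d0 hd).2.
move=> x Sx; rewrite Im_shift_inv ler_wpM2l // lef_pV2 ?posrE ?exprn_gt0 //.
- by rewrite lerXn2r ?nnegrE ?(ltW d0) ?cmod_ge0 ?hd.
- exact: lt_le_trans d0 (hd _ Sx).
Qed.

Lemma stieltjes_lip (z w : R[i]) d : 0 < d ->
  (forall x, S x -> d <= cmod (x%:C - z)) -> (forall x, S x -> d <= cmod (x%:C - w)) ->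
  cmod (cint rho (fun x => (x%:C - z)^-1) - cint rho (fun x => (x%:C - w)^-1))
    <= cmod (z - w) / d ^+ 2.
Proof.
move=> d0 hz hw.
have gz := cgood_shift d0 hz; have gw := cgood_shift d0 hw.
rewrite -(cintB mS PS gz gw) -[leRHS](RintC rho).
apply: (cint_norm mS PS (cgoodB gz gw) (rgoodC _ _)) => x Sx.
have nz : x%:C - z != 0 by rewrite -cmod_gt0 (lt_le_trans d0) ?hz.
have nw : x%:C - w != 0 by rewrite -cmod_gt0 (lt_le_trans d0) ?hw.
have -> : (x%:C - z)^-1 - (x%:C - w)^-1 = (z - w) * ((x%:C - z)^-1 * (x%:C - w)^-1).
  by field; apply/andP.
rewrite !cmodM !cmodV ler_wpM2l ?cmod_ge0 // expr2 invfM.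
have hz' := hz _ Sx; have hw' := hw _ Sx.
apply: ler_pM; rewrite ?invr_ge0 ?cmod_ge0 // lef_pV2 ?posrE //;
  exact: lt_le_trans d0 _.
Qed.

End Stieltjes.

Section StieltjesT.
Variable R : realType.
Variable rho : probability R R.

Lemma PsetT0 : rho (~` setT) = 0%E.
Proof. by rewrite setCT measure0. Qed.

Lemma stieltjes_conj (z : R[i]) : cIm z != 0 ->
  cint rho (fun x => (x%:C - z)^-1) = (cint rho (fun x => (x%:C - z^*)^-1))^*.
Proof.
move=> z0.
have d0 : 0 < `|cIm z| by rewrite normr_gt0.
have hd (w : R[i]) : cIm w = cIm z \/ cIm w = - cIm z -> forall x, setT x -> `|cIm z| <= cmod (x%:C - w).
  move=> hw x _; apply: le_trans (cmod_Im _); rewrite ImB Im_real sub0r normrN.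
  by case: hw => ->; rewrite ?normrN.
have g := cgood_shift d0 (hd (z^*) (or_intror (Im_conj z))).
rewrite -(cint_conj measurableT (@PsetT0) g); congr cint; apply/funext => x.
by rewrite conjc_inv rmorphB /= conjcK oppr0.
Qed.

Lemma Im_stieltjes_lb (c e : R) : 0 < e ->
  fine (rho (ball c e)) / (2 * e) <= cIm (cint rho (fun x => (x%:C - (c +i* e))^-1)).
Proof.
move=> e0.
have hd : forall x, setT x -> e <= cmod (x%:C - (c +i* e)).
  move=> x _; apply: le_trans (cmod_Im _); rewrite ImB Im_real sub0r normrN /=.
  by rewrite gtr0_norm.
have g := cgood_shift e0 hd.
have mB : measurable (ball c e) by exact: measurable_realfun.measurable_ball.
have gI : rgood setT (fun x => (2 * e)^-1 * (\1_(ball c e) x : R)).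
  apply: rgoodM; first exact: rgoodC.
  split; first by apply/measurable_realfun.measurable_indicP.
  by exists 1 => x _; rewrite /indic; case: (x \in _); rewrite ?normr1 ?normr0.
have -> : fine (rho (ball c e)) / (2 * e) =
    Rintegral rho setT (fun x => (2 * e)^-1 * (\1_(ball c e) x : R)).
  rewrite (RintZ measurableT (@PsetT0)); last by case: gI => _ [K hK]; split; [apply/measurable_realfun.measurable_indicP|exists 1 => x _; rewrite /indic; case: (x \in _); rewrite ?normr1 ?normr0].
  by rewrite mulrC /Rintegral integral_indic // setIT.
rewrite Im_cint; apply: (Rint_le measurableT (@PsetT0) gI g.2) => x _.
rewrite Im_shift_inv /indic; have [hx'|nx] := boolP (x \in (ball c e : set R)); last first.
  by rewrite mulr0 divr_ge0 // ?(ltW e0) // exprn_ge0 // cmod_ge0.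
rewrite mulr1; move/set_mem: hx'; rewrite ballRE => hx.
have hx2 : cmod (x%:C - (c +i* e)) ^+ 2 <= 2 * e ^+ 2.
  rewrite cmod_sqr ReB ImB /= sub0r sqrrN.
  have : `|c - x| ^+ 2 <= e ^+ 2 by rewrite lerXn2r ?nnegrE ?(ltW e0) // ltW.
  rewrite -normrX ger0_norm ?sqr_ge0 // -(sqrrN (c - x)) opprB; lra.
have p0 : 0 < cmod (x%:C - (c +i* e)) ^+ 2.
  by apply: exprn_gt0; apply: lt_le_trans e0 (hd x I).
rewrite /= ler_pdivlMr //; apply: le_trans (ler_wpM2l _ hx2) _.
  by rewrite invr_ge0; lra.
rewrite le_eqVlt; apply/orP; left; apply/eqP; field; lra.
Qed.

End StieltjesT.

Section Cover.
Variable R : realType.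
Variable mu : probability R R.

Lemma cover_bound (c r : R) (n : nat) (B : R) : 0 < r -> (0 < n)%N ->
  (forall c', `|c' - c| <= r -> (mu (ball c' (2 * r / n%:R)) <= B%:E)%E) ->
  (mu (ball c r) <= (n%:R * B)%:E)%E.
Proof.
move=> r0 n0 hB.
set s := 2 * r / n%:R.
have s0 : 0 < s by rewrite /s divr_gt0 ?ltr0n //; lra.
have ns : n%:R * s = 2 * r by rewrite /s mulrC divfK // pnatr_eq0 -lt0n.
set F := fun k : nat => ball (c - r + k%:R * s) s.
apply: (le_trans (@content_subadditive _ _ _ mu (ball c r) F n _ _ _)).
- by move=> k _; exact: measurable_realfun.measurable_ball.
- exact: measurable_realfun.measurable_ball.
- move=> y; rewrite ballRE => hy.
  rewrite -bigcup_mkord.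
  have hy0 : 0 <= (y - c + r) / s.
    by rewrite divr_ge0 ?(ltW s0) //; move: hy; rewrite ltr_norml; lra.
  set j := Num.trunc ((y - c + r) / s).
  have [hj1 hj2] := andP (truncn_itv hy0).
  rewrite -/j ler_pdivlMr // in hj1; rewrite -/j ltr_pdivrMr // in hj2.
  exists j.
    rewrite /= -(ltr_nat R) -(ltr_pM2r s0) ns; apply: le_lt_trans hj1 _.
    by move: hy; rewrite ltr_norml; lra.
  rewrite /F ballRE; rewrite mulrSr in hj2.
  rewrite ler0_norm ?lter_norml; lra.
- rewrite (_ : (n%:R * B)%:E = \sum_(k < n) B%:E)%E; last first.
    by rewrite sumEFin sumr_const card_ord mulr_natl.
  apply: lee_sum => k _; apply: hB.
  have hk : (k%:R : R) * s <= 2 * r.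
    by rewrite -ns ler_wpM2r ?(ltW s0) // ler_nat ltnW.
  have hk0 : 0 <= (k%:R : R) * s by rewrite mulr_ge0 ?(ltW s0).
  rewrite ler_norml; lra.
Qed.

End Cover.

Section Main.
Variable R : realType.
Variable nu : probability R R.
Variables (M : R) (hM : 0 <= M) (PSnu : nu (~` `[-M, M]) = 0%E).
Variables (rho : R -> probability R R) (Lm Lp : R -> R) (mfc : R -> R[i] -> R[i]).
Variable good : R -> Prop.
Hypothesis H : forall th, good th ->
     [/\ Lm th <= Lp th,
         msupport (rho th) `<=` `[Lm th, Lp th],
         msupport (rho th) (Lm th) /\ msupport (rho th) (Lp th),
         (forall z : R[i], ~ (complex.Im z = 0 /\ Lm th <= complex.Re z <= Lp th) ->
            mfc th z = cintegral (rho th) (fun x => (x%:C - z)^-1)) &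
         (forall z : R[i], 0 < complex.Im z ->
            0 < complex.Im (mfc th z) /\
            mfc th z = cintegral nu (fun x => ((th * x)%:C - z - mfc th z)^-1))].

Lemma hullP th x : [set` `[Lm th, Lp th]] x <-> Lm th <= x <= Lp th.
Proof. by rewrite /= in_itv. Qed.

Lemma rep th w : good th -> cIm w != 0 -> mfc th w = cint (rho th) (fun x => (x%:C - w)^-1).
Proof.
move=> g w0; have [_ _ _ h _] := H g; apply: h => -[w0' _].
by move: w0; rewrite w0' eqxx.
Qed.

Lemma PSrho th : good th -> rho th (~` `[Lm th, Lp th]) = 0%E.
Proof. by move=> g; have [_ s _ _ _] := H g; exact: null_outside_itv. Qed.

Lemma upper th1 th2 w d : good th1 -> good th2 -> 0 < d -> 0 < cIm w ->
  (forall x, Lm th1 <= x <= Lp th1 -> d <= cmod (x%:C - w)) ->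
  cmod (mfc th1 w - mfc th2 w) <= 2 * M * (1 + (d ^+ 2)^-1) * `|th1 - th2|.
Proof.
move=> g1 g2 d0 w0 hd.
have [_ _ _ _ h1] := H g1; have [q1 e1] := h1 w w0.
have [_ _ _ _ h2] := H g2; have [q2 e2] := h2 w w0.
apply: (core hM PSnu (z := w)) => //.
- by rewrite invr_ge0 exprn_ge0 // ltW.
- rewrite (rep g1 (lt0r_neq0 w0)).
  apply: (Im_stieltjes_ub (measurable_itv _) (PSrho g1) d0 (ltW w0)).
  by move=> x /hullP /hd.
Qed.


Lemma rep' th w : good th -> ~ (cIm w = 0 /\ Lm th <= cRe w <= Lp th) ->
  mfc th w = cint (rho th) (fun x => (x%:C - w)^-1).
Proof. by move=> g hw; have [_ _ _ h _] := H g; apply: h. Qed.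

Lemma conj_rep th w : good th -> cIm w != 0 -> mfc th w = (mfc th (w^*))^*.
Proof.
move=> g w0; rewrite (rep g w0) (rep (w := w^*) g); last by rewrite Im_conj oppr_eq0.
by rewrite -stieltjes_conj.
Qed.

Lemma lowerhalf th1 th2 w d : good th1 -> good th2 -> 0 < d -> cIm w < 0 ->
  (forall x, Lm th1 <= x <= Lp th1 -> d <= cmod (x%:C - w)) ->
  cmod (mfc th1 w - mfc th2 w) <= 2 * M * (1 + (d ^+ 2)^-1) * `|th1 - th2|.
Proof.
move=> g1 g2 d0 w0 hd.
rewrite (conj_rep g1 (ltr0_neq0 w0)) (conj_rep g2 (ltr0_neq0 w0)) -rmorphB /= cmod_conj.
apply: upper => //; first by rewrite Im_conj oppr_gt0.
move=> x hx; rewrite -(conjc_real x) -rmorphB /= cmod_conj; exact: hd.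
Qed.

Lemma le_eps (a b K : R) : 0 <= K -> (forall e, 0 < e -> a <= b + e * K) -> a <= b.
Proof.
move=> K0 h; apply/ler_addgt0Pr => e e0.
have := h (e / (K + 1)) (divr_gt0 e0 (ltr_pwDr ltr01 K0)).
move=> h1; apply: le_trans h1 _; rewrite lerD2l.
rewrite mulrAC ler_pdivrMr; last lra.
by rewrite ler_wpM2l //; [exact: ltW | lra].
Qed.

Lemma cmod_ReB (x : R) (w : R[i]) : `|x - cRe w| <= cmod (x%:C - w).
Proof. by apply: le_trans (cmod_Re _); rewrite ReB. Qed.

Lemma realcase th1 th2 z d : good th1 -> good th2 -> 0 < d -> cIm z = 0 ->
  (forall x, Lm th1 <= x <= Lp th1 -> d <= cmod (x%:C - z)) ->
  ~ (Lm th2 <= cRe z <= Lp th2) ->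
  cmod (mfc th1 z - mfc th2 z) <= 2 * M * (1 + (d ^+ 2)^-1) * `|th1 - th2|.
Proof.
move=> g1 g2 d0 z0 hd nin.
set u := cRe z.
have ze : z = u%:C by rewrite [LHS]complex_eta z0.
have cz x : cmod (x%:C - z) = `|x - u| by rewrite ze -rmorphB cmod_real.
have [d2 [d20 hd2]] : exists d2, 0 < d2 /\ forall x, Lm th2 <= x <= Lp th2 -> d2 <= cmod (x%:C - z).
  have [ul|ul] := ltrP u (Lm th2).
    exists (Lm th2 - u); split; first lra.
    move=> x /andP[h1 h2]; rewrite cz; apply: le_trans (ler_norm _); lra.
  have ug : Lp th2 < u by move: nin; rewrite ul /= => /negP; rewrite -ltNge.
  exists (u - Lp th2); split; first lra.
  move=> x /andP[h1 h2]; rewrite cz -normrN; apply: le_trans (ler_norm _); lra.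
have in1 : ~ (cIm z = 0 /\ Lm th1 <= cRe z <= Lp th1).
  case=> _ hu; have := hd _ hu; rewrite cz subrr normr0; lra.
have in2 : ~ (cIm z = 0 /\ Lm th2 <= cRe z <= Lp th2) by case.
rewrite (rep' g1 in1) (rep' g2 in2).
apply: (le_eps (K := (d ^+ 2)^-1 + (d2 ^+ 2)^-1)).
  by rewrite addr_ge0 // invr_ge0 exprn_ge0 // ltW.
move=> e e0.
set w := u +i* e.
have w0 : 0 < cIm w by [].
have zw : cmod (z - w) = e.
  by rewrite ze /w /cmod /= subrr expr0n /= add0r sub0r sqrrN sqrtr_sqr gtr0_norm.
have hw1 x : Lm th1 <= x <= Lp th1 -> d <= cmod (x%:C - w).
  by move=> hx; apply: le_trans (hd _ hx) _; rewrite cz; have := cmod_ReB x w.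
have hw2 x : Lm th2 <= x <= Lp th2 -> d2 <= cmod (x%:C - w).
  by move=> hx; apply: le_trans (hd2 _ hx) _; rewrite cz; have := cmod_ReB x w.
have L1 := stieltjes_lip (measurable_itv _) (PSrho g1) d0
  (fun x hx => hd x (proj1 (hullP _ _) hx)) (fun x hx => hw1 x (proj1 (hullP _ _) hx)).
have L2 := stieltjes_lip (measurable_itv _) (PSrho g2) d20
  (fun x hx => hw2 x (proj1 (hullP _ _) hx)) (fun x hx => hd2 x (proj1 (hullP _ _) hx)).
have U := upper g1 g2 d0 w0 hw1.
rewrite (rep g1 (lt0r_neq0 w0)) (rep g2 (lt0r_neq0 w0)) in U.
rewrite zw in L1; rewrite (cmodB w z) zw in L2.
set a := cint (rho th1) _ in L1 U *.
set b := cint (rho th1) _ in L1 U *.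
set c := cint (rho th2) _ in L2 U *.
set f := cint (rho th2) _ in L2 U *.
have -> : a - f = (a - b) + (b - c) + (c - f) by ring.
apply: le_trans (cmodD _ _) _; apply: le_trans (lerD (cmodD _ _) (lexx _)) _.
rewrite mulrDr; lra.
Qed.


Lemma ball_fin th c e : (rho th (ball c e)) \is a fin_num.
Proof.
rewrite ge0_fin_numE ?measure_ge0 //; apply: le_lt_trans (probability_le1 _ _) _ => //.
  exact: measurable_realfun.measurable_ball.
exact: ltry.
Qed.

Lemma ball_bound thN thi (c' s d' : R) : good thN -> good thi -> 0 < s -> 0 < d' ->
  (forall x, Lm thN <= x <= Lp thN -> d' <= `|x - c'|) ->
  fine (rho thi (ball c' s)) <= 2 * s * (s / d' ^+ 2 + 2 * M * (1 + (d' ^+ 2)^-1) * `|thN - thi|).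
Proof.
move=> gN gi s0 d0 hd.
set w := c' +i* s.
have w0 : 0 < cIm w by [].
have hw x : Lm thN <= x <= Lp thN -> d' <= cmod (x%:C - w).
  by move=> hx; apply: le_trans (hd _ hx) _; have := cmod_ReB x w.
have lb := Im_stieltjes_lb (rho thi) c' s0.
rewrite -/w -(rep gi (lt0r_neq0 w0)) in lb.
have ub := Im_stieltjes_ub (measurable_itv _) (PSrho gN) d0 (ltW w0)
  (fun x hx => hw x (proj1 (hullP _ _) hx)).
rewrite -(rep gN (lt0r_neq0 w0)) in ub.
have U := upper gN gi d0 w0 hw.
have I : cIm (mfc thi w) <= cIm (mfc thN w) + cmod (mfc thN w - mfc thi w).
  have := cmod_Im (mfc thN w - mfc thi w); rewrite ImB => h.
  have h2 := ler_norm (cIm (mfc thi w) - cIm (mfc thN w)); rewrite distrC in h2; lra.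
have : fine (rho thi (ball c' s)) / (2 * s) <= s / d' ^+ 2 + 2 * M * (1 + (d' ^+ 2)^-1) * `|thN - thi|.
  apply: le_trans lb _; apply: le_trans I _; apply: lerD => //.
rewrite ler_pdivrMr; last lra.
by rewrite mulrC.
Qed.


Lemma not_in_hull (theta : nat -> R) thi u delta : good thi -> (forall N, good (theta N)) ->
  theta @ \oo --> thi -> 0 < delta ->
  (forall N x, Lm (theta N) <= x <= Lp (theta N) -> delta <= `|x - u|) ->
  ~ (Lm thi <= u <= Lp thi).
Proof.
move=> gi gN cv d0 hd /andP[hl hu].
set r := delta / 4.
set d' := delta / 2.
have r0 : 0 < r by rewrite /r; lra.
have d'0 : 0 < d' by rewrite /d'; lra.
set C1 := 2 * M * (1 + (d' ^+ 2)^-1).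
have C10 : 0 <= C1 by rewrite /C1 !mulr_ge0 // addr_ge0 // invr_ge0 exprn_ge0 // ltW.
have [_ _ [s1 s2] _ _] := H gi.
set p1 := fine (rho thi (ball (Lp thi) r)).
set p2 := fine (rho thi (ball (Lm thi) r)).
have p10 : 0 < p1.
  by apply: fine_gt0; rewrite s2 //= -ge0_fin_numE ?measure_ge0 // ball_fin.
have p20 : 0 < p2.
  by apply: fine_gt0; rewrite s1 //= -ge0_fin_numE ?measure_ge0 // ball_fin.
set Bd := fun N (n : nat) => 4 * r * ((2 * r / n%:R) / d' ^+ 2 + C1 * `|theta N - thi|).
have key : forall N (n : nat), (0 < n)%N -> p1 <= Bd N n \/ p2 <= Bd N n.
  move=> N n n0.
  have [l1 _ _ _ _] := H (gN N).
  set s := 2 * r / n%:R.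
  have s0 : 0 < s by rewrite /s divr_gt0 ?ltr0n //; lra.
  have ns : n%:R * s = 2 * r by rewrite /s mulrC divfK // pnatr_eq0 -lt0n.
  have BdE : Bd N n = n%:R * (2 * s * (s / d' ^+ 2 + C1 * `|theta N - thi|)).
    rewrite /Bd -/s; transitivity ((n%:R * s) * 2 * (s / d' ^+ 2 + C1 * `|theta N - thi|)); last by ring.
    by rewrite ns; ring.
  have cov : forall c, (forall c', `|c' - c| <= r -> forall x, Lm (theta N) <= x <= Lp (theta N) -> d' <= `|x - c'|) ->
      fine (rho thi (ball c r)) <= Bd N n.
    move=> c hc.
    have := cover_bound (mu := rho thi) (c := c) (B := 2 * s * (s / d' ^+ 2 + C1 * `|theta N - thi|)) r0 n0.
    rewrite -/s BdE => h.
    rewrite -lee_fin fineK ?ball_fin //; apply: h => c' hc'.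
    rewrite -(fineK (ball_fin thi c' s)) lee_fin.
    exact: (ball_bound (gN N) gi s0 d'0 (hc c' hc')).
  have [uA|uB] : Lp (theta N) + delta <= u \/ u <= Lm (theta N) - delta.
    case: (ltrP u (Lm (theta N))) => h1.
      right; have := hd N (Lm (theta N)); rewrite lexx l1 => /(_ isT).
      rewrite gtr0_norm; lra.
    case: (ltrP (Lp (theta N)) u) => h2.
      left; have := hd N (Lp (theta N)); rewrite lexx l1 => /(_ isT).
      rewrite ltr0_norm; lra.
    have := hd N u; rewrite h1 h2 subrr normr0 => /(_ isT); lra.
  - left; apply: cov => c' hc' x /andP[hx1 hx2].
    rewrite ler_norml in hc'.
    apply: le_trans (_ : d' <= c' - x) _; first by rewrite /d' /r in hc' *; lra.
    by rewrite distrC; exact: ler_norm.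
  - right; apply: cov => c' hc' x /andP[hx1 hx2].
    rewrite ler_norml in hc'.
    apply: le_trans (_ : d' <= x - c') _; first by rewrite /d' /r in hc' *; lra.
    exact: ler_norm.
set pm := Num.min p1 p2.
have pm0 : 0 < pm by rewrite /pm lt_min p10 p20.
have pm1 : pm <= p1 by rewrite /pm ge_min lexx.
have pm2 : pm <= p2 by rewrite /pm ge_min lexx orbT.
set n := (Num.trunc (16 * r ^+ 2 / (pm * d' ^+ 2))).+1.
have hn : 16 * r ^+ 2 / (pm * d' ^+ 2) < n%:R by exact: truncnS_gt.
have n0 : (0 < n)%N by [].
have nR : 0 < (n%:R : R) by rewrite ltr0n.
set eps := pm / (8 * r * C1 + 1).
have eps0 : 0 < eps by rewrite /eps divr_gt0 //; nra.
have [N _ hN] := (proj1 (cvgrPdist_lt _ _) cv) eps eps0.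
have hN' := hN N (leqnn N); rewrite /= distrC in hN'.
have hB : Bd N n < pm.
  have -> : Bd N n = 8 * r ^+ 2 / (n%:R * d' ^+ 2) + 4 * r * C1 * `|theta N - thi|.
    by rewrite /Bd; field; rewrite !gt_eqF.
  have h1 : 8 * r ^+ 2 / (n%:R * d' ^+ 2) < pm / 2.
    rewrite ltr_pdivrMr; last by rewrite mulr_gt0 // exprn_gt0.
    rewrite ltr_pdivrMr in hn; last by rewrite mulr_gt0 // exprn_gt0.
    nra.
  have h2 : 4 * r * C1 * `|theta N - thi| <= 4 * r * C1 * eps.
    apply: ler_wpM2l (ltW hN'); apply: mulr_ge0 => //; lra.
  have h3 : 4 * r * C1 * eps < pm / 2.
    rewrite /eps mulrA ltr_pdivrMr; last nra.
    nra.
  lra.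
have [h|h] := key N n n0; lra.
Qed.

End Main.

Unset Implicit Arguments. Set Strict Implicit. Set Printing Implicit Defensive.

Theorem mainTheorem8 (R : realType)
  (nu : probability R R) (varpi : R)
  (rho : R -> probability R R) (Lm Lp : R -> R) (mfc : R -> R[i] -> R[i])
  (theta : nat -> R) (theta_inf : R) (D : set R[i]) :
  compact (msupport nu) ->
  (\int[nu]_x (x%:E) = 0)%E ->
  0 < varpi ->
  (forall x, hull_interval (msupport nu) x ->
     ((1 + varpi)%:E <= \int[nu]_v inv_sq_ext x v)%E) ->
  (forall th, 0 <= th <= 1 + varpi ->
     [/\ Lm th <= Lp th,
         msupport (rho th) `<=` `[Lm th, Lp th],
         msupport (rho th) (Lm th) /\ msupport (rho th) (Lp th),
         (forall z : R[i], ~ (complex.Im z = 0 /\ Lm th <= complex.Re z <= Lp th) ->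
            mfc th z = cintegral (rho th) (fun x => (x%:C - z)^-1)) &
         (forall z : R[i], 0 < complex.Im z ->
            0 < complex.Im (mfc th z) /\
            mfc th z = cintegral nu (fun x => ((th * x)%:C - z - mfc th z)^-1))]) ->
  (forall N, 0 <= theta N <= 1 + varpi) ->
  theta @ \oo --> theta_inf ->
  compact [set p : R * R | D (p.1 +i* p.2)] ->
  (exists delta : R, 0 < delta /\
     forall N z x, D z -> Lm (theta N) <= x <= Lp (theta N) ->
       delta <= cmod (z - x%:C)) ->
  exists C : R, 0 < C /\
    \forall N \near \oo, forall z, D z ->
      cmod (mfc (theta N) z - mfc theta_inf z) <= C * `|theta N - theta_inf|.
Proof.
move=> hsupp _ _ _ H htheta hconv _ [delta [d0 hdel]].
have [M0 [_ hM0]] := compact_bounded hsupp.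
set M := `|M0| + 1.
have hM : 0 <= M by rewrite /M addr_ge0.
have sub : msupport nu `<=` `[- M, M].
  have lt : M0 < M by rewrite /M; apply: le_lt_trans (ler_norm _) _; lra.
  move=> x Sx; have := hM0 M lt x Sx.
  by rewrite /= in_itv /= -ler_norml.
have PSnu := null_outside_itv sub.
have gi : 0 <= theta_inf <= 1 + varpi.
  have := closed_cvg [set` `[0, 1 + varpi]]
    (@interval_closed R (BLeft 0) (BRight (1 + varpi)) isT isT) _ _ hconv.
  rewrite /= in_itv /=; apply; apply: nearW => n; by rewrite /= in_itv /= htheta.
set C0 := 2 * M * (1 + (delta ^+ 2)^-1).
have C00 : 0 <= C0 by rewrite /C0 !mulr_ge0 // addr_ge0 // invr_ge0 exprn_ge0 // ltW.
exists (C0 + 1); split; first lra.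
apply: nearW => N z Dz.
have gN := htheta N.
have hz x : Lm (theta N) <= x <= Lp (theta N) -> delta <= cmod (x%:C - z).
  by move=> hx; rewrite cmodB; exact: (hdel N z x Dz hx).
suff : cmod (mfc (theta N) z - mfc theta_inf z) <= C0 * `|theta N - theta_inf|.
  by move=> h; apply: le_trans h _; rewrite ler_wpM2r // lerDl.
case: (ltrgtP (cIm z) 0) => z0.
- exact: (lowerhalf hM PSnu H gN gi d0 z0 hz).
- exact: (upper hM PSnu H gN gi d0 z0 hz).
- apply: (realcase hM PSnu H gN gi d0 z0 hz).
  apply: (not_in_hull hM PSnu H gi htheta hconv d0) => N' x hx.
  have := hdel N' z x Dz hx.
  by rewrite [z]complex_eta z0 -[_ +i* 0]/((cRe z)%:C) -rmorphB cmod_real distrC.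
Qed.
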